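(* Let $d\geq 2$ and $n$ be positive integers, $t\in\{1,d-1\}$, and $n\equiv t\pmod d$ (so $tn\equiv 1\pmod d$). Then, modulo $(1-aq^{tn})(a-q^{tn})(b-q^{tn})$, \[ \sum_{k=0}^{(tn-1)/d}\frac{(aq;q^d)_k(q/a;q^d)_k(q/b;q^d)_k}{(q^d;q^d)_k(c;q^d)_k(q^{d+3}/bc;q^d)_k}q^{dk} \equiv\frac{(1-aq^{tn})(a-q^{tn})}{(a-b)(1-ab)}\frac{(c/aq;q^d)_{m}(ac/q;q^d)_{m}}{(c;q^d)_{m}(c/q^2;q^d)_{m}} +\frac{(b-q^{tn})(ab-1-a^2+aq^{tn})}{(a-b)(1-ab)}\frac{(q/b)^{m}(bc/q;q^d)_{m}(q^{d+2}/c;q^d)_{m}}{(c;q^d)_{m}(q^{d+3}/bc;q^d)_{m}}, \] where $m=(tn-1)/d$.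
   Context: For complex $x$ and $q$, $(x;q)_0=1$ and $(x;q)_m=(1-x)(1-xq)\cdots(1-xq^{m-1})$ for positive integers $m$. Here $a,b,c,q$ are indeterminates and both sides are rational functions in them; the congruence $A\equiv B$ modulo $P=(1-aq^{tn})(a-q^{tn})(b-q^{tn})$ means that $A-B=P\cdot R$ for a rational function $R$ whose denominator is coprime to each of the factors $1-aq^{tn}$, $a-q^{tn}$, $b-q^{tn}$. *)

(* Defs.v *)
From HB Require Import structures.
From mathcomp Require Import all_boot all_order all_algebra.
From mathcomp Require Import fraction.
From mathcomp.multinomials Require Import mpoly.
Set Implicit Arguments. Unset Strict Implicit. Unset Printing Implicit Defensive.
Import Order.TTheory GRing.Theory Num.Theory.
Local Open Scope ring_scope.

Definition Poly : idomainType := {mpoly rat[4]}.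
Definition RF : fieldType := {fraction Poly}.
Definition toRF (p : Poly) : RF := @FracField.tofrac Poly p.
Notation "x %:F" := (toRF x) : ring_scope.

Definition Xa : Poly := 'X_(@inord 3 0).
Definition Xb : Poly := 'X_(@inord 3 1).
Definition Xc : Poly := 'X_(@inord 3 2).
Definition Xq : Poly := 'X_(@inord 3 3).

Definition fa : RF := Xa%:F.
Definition fb : RF := Xb%:F.
Definition fc : RF := Xc%:F.
Definition fq : RF := Xq%:F.

Definition qpoch (R : comNzRingType) (x p : R) (k : nat) : R :=
  \prod_(i < k) (1 - x * p ^+ i).

Definition pdvd (f g : Poly) : Prop := exists h : Poly, g = f * h.
Definition pcoprime (f g : Poly) : Prop :=
  forall h : Poly, pdvd h f -> pdvd h g -> h \is a GRing.unit.

(* A = B modulo P = f1*f2*f3: A - B = P * R with R = N/D, D coprime to each fi *)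
Definition cong3 (A B : RF) (f1 f2 f3 : Poly) : Prop :=
  exists N D : Poly, [/\ D != 0, pcoprime D f1, pcoprime D f2, pcoprime D f3 &
    A - B = (f1 * f2 * f3)%:F * (N%:F / D%:F)].

(* Main.v *)
Require Import Defs.
From HB Require Import structures.
From mathcomp Require Import all_boot all_order all_algebra.
From mathcomp Require Import fraction.
From mathcomp.multinomials Require Import mpoly.
From mathcomp Require Import ring zify.
Import GRing.Theory.
Local Open Scope ring_scope.

Section Gen.
Variable F : fieldType.
Implicit Types (x p A B C : F).

Lemma qpochS x p k : qpoch x p k.+1 = qpoch x p k  *  (1 - x  *  p ^+ k).
Proof. by rewrite /qpoch big_ord_recr. Qed.

Lemma qpoch0 x p : qpoch x p 0 = 1.
Proof. by rewrite /qpoch big_ord0. Qed.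

Lemma qpoch_shift x p k : qpoch x p k.+1 = (1 - x)  *  qpoch (x  *  p) p k.
Proof.
rewrite /qpoch big_ord_recl expr0 mulr1; congr (_  *  _).
by apply: eq_bigr => i _; rewrite lift0 exprS; ring.
Qed.

Lemma qpoch_neq0 x p k : (forall i, (i < k)%N -> 1 - x  *  p ^+ i != 0) -> qpoch x p k != 0.
Proof.
move=> H; rewrite /qpoch; apply/prodf_neq0 => i _; exact: H.
Qed.

Lemma key_id (A B C p x y PA PB U1 Pp PC V1 : F) :
  p != 0 -> x != 0 -> y != 0 -> A != 0 -> B != 0 -> C != 0 ->
  Pp != 0 -> PC != 0 -> V1 != 0 ->
  1 - p * x != 0 -> 1 - C * x != 0 -> C * y - A * B * x != 0 ->
  C * y - A * B != 0 -> A * B - C * y != 0 -> p * y - 1 != 0 -> 1 - C * y != 0 ->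
  let t1 := PA * PB * U1 / (Pp * PC * V1) * x in
  let t1' := PA * (1 - A * x) * PB * (1 - B * x) * U1 * (1 - x / (p * y)) /
     (Pp * (1 - p * x) * PC * (1 - C * x) * V1 * (1 - A * B / (C * y) * x)) * (x * p) in
  let t0 := PA * PB * (U1 * (1 - x / (p * y)) / (1 - 1 / (p * y))) /
     (Pp * PC * (V1 * (1 - A * B / (C * y) * x) / (1 - A * B / (C * y)))) * x in
  let lam := (1 - C * y / A) * (1 - C * y / B) / ((1 - C * y) * (1 - C * y / (A * B))) in
  let den := (1 - 1 / (p * y)) * (1 - C * y) in
  t1 - lam * t0 = (1 - p * x) * (1 - C * x) * t1' / (p * x * den) - (1 - x) * (1 - C * x / p) * t1 / (x * den).
Proof.
move=> ? ? ? ? ? ? ? ? ? ? ? ? ? ? ? ? t1 t1' t0 lam den; rewrite /t1 /t1' /t0 /lam /den.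
by field; repeat (apply/andP; split).
Qed.

Lemma qpoch_end p N : p != 0 -> qpoch (p ^+ N)^-1 p N.+1 = 0.
Proof. by move=> hp; rewrite qpochS mulVf ?subrr ?mulr0 // expf_neq0. Qed.

Lemma one_sub_div (v w : F) : v != 0 -> (v - w != 0) = (1 - w / v != 0).
Proof.
move=> hv; have -> : v - w = v * (1 - w / v) by field.
by rewrite mulf_eq0 negb_or hv.
Qed.

Section Saal.
Variables (A B C p : F).
Hypothesis hp : p != 0.
Hypothesis hA : A != 0.
Hypothesis hB : B != 0.
Hypothesis hC : C != 0.
Hypothesis hpj : forall j, 1 - p ^+ j.+1 != 0.
Hypothesis hCj : forall j, 1 - C * p ^+ j != 0.
Hypothesis hCAB : forall j, 1 - C * p ^+ j / (A * B) != 0.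
Hypothesis hABC : forall i j, 1 - A * B * p ^+ i / (C * p ^+ j) != 0.

Definition sterm (N k : nat) := qpoch A p k * qpoch B p k * qpoch (p ^+ N)^-1 p k /
  (qpoch p p k * qpoch C p k * qpoch (A * B * p / (C * p ^+ N)) p k) * p ^+ k.
Definition srhs N := qpoch (C / A) p N * qpoch (C / B) p N /
  (qpoch C p N * qpoch (C / (A * B)) p N).
Definition lam N := (1 - C * p ^+ N / A) * (1 - C * p ^+ N / B) /
  ((1 - C * p ^+ N) * (1 - C * p ^+ N / (A * B))).
Definition Gt N k := (1 - p ^+ k) * (1 - C * p ^+ k / p) * sterm N.+1 k /
  (p ^+ k * ((1 - 1 / (p * p ^+ N)) * (1 - C * p ^+ N))).

Lemma step_k N k : sterm N.+1 k - lam N * sterm N k = Gt N k.+1 - Gt N k.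
Proof.
have hpN : forall j, p ^+ j != 0 by move=> j; rewrite expf_neq0.
have hp1 : forall j, p ^+ j.+1 - 1 != 0.
  by move=> j; rewrite -oppr_eq0 opprB hpj.
have hz : 1 - (p ^+ N.+1)^-1 != 0.
  have -> : 1 - (p ^+ N.+1)^-1 = - (1 - p ^+ N.+1) / p ^+ N.+1.
    by field; rewrite expf_neq0.
  by rewrite mulf_neq0 ?oppr_eq0 ?invr_eq0 ?expf_neq0.
rewrite /Gt /sterm /lam.
set U0 := qpoch (p ^+ N)^-1 p k.
set V0 := qpoch (A * B * p / (C * p ^+ N)) p k.
set U1 := qpoch (p ^+ N.+1)^-1 p k.
set be := A * B * p / (C * p ^+ N.+1).
set V1 := qpoch be p k.
have hU : U0 = U1 * (1 - (p ^+ N.+1)^-1 * p ^+ k) / (1 - (p ^+ N.+1)^-1).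
  have := qpoch_shift ((p ^+ N.+1)^-1) p k; rewrite qpochS.
  have -> : (p ^+ N.+1)^-1 * p = (p ^+ N)^-1.
    by rewrite exprS; field; rewrite hp expf_neq0.
  by move=> e; apply: (mulfI hz); rewrite /U0 -e /U1; field; rewrite hpN hp1.
have hbe : 1 - be != 0 by rewrite /be exprS -(expr1 p) -exprS hABC.
have hV : V0 = V1 * (1 - be * p ^+ k) / (1 - be).
  have := qpoch_shift be p k; rewrite qpochS.
  have -> : be * p = A * B * p / (C * p ^+ N).
    by rewrite /be exprS; field; rewrite hp hC expf_neq0.
  by move=> e; apply: (mulfI hbe); rewrite /V0 -e /V1; field.
rewrite hU hV !qpochS /U1 /V1 /be !exprS.
have hPp : qpoch p p k != 0.
  by apply: qpoch_neq0 => i _; rewrite -exprS hpj.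
have hPC : qpoch C p k != 0 by apply: qpoch_neq0 => i _; rewrite hCj.
have hPV : qpoch (A * B * p / (C * (p * p ^+ N))) p k != 0.
  apply: qpoch_neq0 => i _.
  have -> : A * B * p / (C * (p * p ^+ N)) * p ^+ i = A * B * p ^+ i.+1 / (C * p ^+ N.+1).
    by rewrite !exprS; field; rewrite hp hC hpN.
  exact: hABC.
move: hPp hPC hPV.
set x := p ^+ k; set y := p ^+ N.
move: (qpoch A p k) (qpoch B p k) (qpoch (p * y)^-1 p k) (qpoch p p k) (qpoch C p k) (qpoch (A * B * p / (C * (p * y))) p k) => PA PB U Pp PC V hPp hPC hPV.
have h1 : C * y - A * B * x != 0 by rewrite one_sub_div ?mulf_neq0 ?hpN // hABC.
have h2 : C * y - A * B != 0.
  by rewrite one_sub_div ?mulf_neq0 ?hpN // -[A * B]mulr1 -(expr0 p) hABC.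
have h3 : A * B - C * y != 0 by rewrite one_sub_div ?mulf_neq0 ?hpN // hCAB.
have h4 : p * y - 1 != 0 by rewrite -exprS hp1.
have h5 : 1 - p * x != 0 by rewrite -exprS hpj.
have h6 := hCj k; have h7 := hCj N; have h8 := hpN k; have h9 := hpN N.
by field; rewrite h1 h2 h3 h4 h5 h6 h7 h8 h9 hPp hPC hPV hp hA hB hC.
Qed.

Lemma hCAB' j : 1 - C / (A * B) * p ^+ j != 0.
Proof. by rewrite mulrAC hCAB. Qed.

Lemma srhsS N : srhs N.+1 = lam N * srhs N.
Proof.
have hq1 : qpoch C p N != 0 by apply: qpoch_neq0 => i _; rewrite hCj.
have hq2 : qpoch (C / (A * B)) p N != 0 by apply: qpoch_neq0 => i _; rewrite hCAB'.
have h1 := hCj N; have h2 := hCAB' N.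
move: hq1 hq2 h1 h2; rewrite /srhs /lam !qpochS.
move: (qpoch (C / A) p N) (qpoch (C / B) p N) (qpoch C p N) (qpoch (C / (A * B)) p N) => a1 a2 a3 a4.
move=> h3 h4 h1 h2.
have h2' : 1 - C * p ^+ N / (A * B) != 0 by rewrite hCAB.
rewrite [C / (A * B) * _]mulrAC.
have h5 : A * B - C * p ^+ N != 0 by rewrite one_sub_div ?mulf_neq0 // hCAB.
by field; rewrite h1 h5 h3 h4 hA hB.
Qed.

Lemma sterm_end N : sterm N N.+1 = 0.
Proof. by rewrite /sterm qpoch_end // mulr0 mul0r mul0r. Qed.

Lemma Gt0 N : Gt N 0 = 0.
Proof. by rewrite /Gt expr0 subrr !mul0r. Qed.

Lemma GtE N : Gt N N.+2 = 0.
Proof. by rewrite /Gt /sterm qpoch_end // !(mulr0, mul0r). Qed.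

Lemma saal N : \sum_(k < N.+1) sterm N k = srhs N.
Proof.
elim: N => [|N IH].
  by rewrite big_ord1 /sterm /srhs !qpoch0 expr0 !(mulr1, invr1).
have e : forall k, sterm N.+1 k = lam N * sterm N k + (Gt N k.+1 - Gt N k).
  by move=> k; rewrite -step_k addrC subrK.
under eq_bigr => k _ do rewrite e.
rewrite big_split /= -mulr_sumr.
rewrite big_ord_recr /= sterm_end addr0 IH.
rewrite -(big_mkord xpredT (fun k => Gt N k.+1 - Gt N k)) telescope_sumr //.
by rewrite GtE Gt0 subr0 addr0 srhsS.
Qed.
End Saal.
Lemma qpoch_rev (w p : F) m : p != 0 ->
  qpoch (w * p / p ^+ m) p m = \prod_(i < m) (1 - w / p ^+ i).
Proof.
move=> hp; rewrite /qpoch (reindex_inj rev_ord_inj) /=.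
apply: eq_bigr => i _; congr (_ - _).
have e : m = ((m - i.+1) + i.+1)%N by rewrite subnK.
rewrite [in p ^+ m]e exprD exprS; field.
by rewrite hp !expf_neq0.
Qed.

Lemma rev_ratio (w1 w2 p : F) m : p != 0 -> w1 != 0 -> w2 != 0 ->
  (forall i, 1 - p ^+ i / w2 != 0) ->
  qpoch (w1 * p / p ^+ m) p m / qpoch (w2 * p / p ^+ m) p m =
  (w1 / w2) ^+ m * (qpoch w1^-1 p m / qpoch w2^-1 p m).
Proof.
move=> hp h1 h2 h3; rewrite !qpoch_rev // -prodf_div.
have -> : (w1 / w2) ^+ m = \prod_(i < m) (w1 / w2).
  by rewrite prodr_const card_ord.
rewrite /qpoch -prodf_div -big_split /=.
apply: eq_bigr => i _.
have hi := h3 i; have hpi : p ^+ i != 0 by rewrite expf_neq0.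
have e1 : w2 - p ^+ i != 0 by rewrite one_sub_div.
have e2 : p ^+ i - w2 != 0 by rewrite -oppr_eq0 opprB.
by field; rewrite e1 e2 hpi h1 h2.
Qed.
End Gen.

Notation PP := Defs.Poly.

Definition fC : {rmorphism rat -> RF} := (toRF \o (@mpolyC 4 rat))%FUN.
Definition ev (h : 'I_4 -> RF) : PP -> RF := mmap fC h.

Lemma evX h i : ev h 'X_i = h i.
Proof. by rewrite /ev mmapX mmap1U. Qed.
Lemma evC h c : ev h c%:MP = toRF c%:MP.
Proof. by rewrite /ev mmapC. Qed.

Lemma toRF_eq0 (x : PP) : (toRF x == 0) = (x == 0).
Proof. exact: tofrac_eq0. Qed.

Lemma toRFD (x y : PP) : toRF (x + y) = toRF x + toRF y. Proof. exact: tofracD. Qed.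
Lemma toRFB (x y : PP) : toRF (x - y) = toRF x - toRF y. Proof. exact: tofracB. Qed.
Lemma toRFM (x y : PP) : toRF (x * y) = toRF x * toRF y. Proof. exact: tofracM. Qed.
Lemma toRFX (x : PP) k : toRF (x ^+ k) = toRF x ^+ k. Proof. exact: tofracXn. Qed.
Lemma toRF1 : toRF 1 = 1. Proof. exact: tofrac1. Qed.
Lemma toRF0 : toRF 0 = 0. Proof. exact: tofrac0. Qed.

Section Div.
Variable e : {rmorphism PP -> RF}.
Variables (f s u v : PP).
Hypothesis bez : u * f + v * s = 1.
Hypothesis eC : forall c, e c%:MP = toRF c%:MP.
Hypothesis eX : forall i : 'I_4, exists k r g,
  s ^+ k * 'X_i = r + f * g /\ e 'X_i * toRF s ^+ k = toRF r.

Definition Pd (N : PP) := exists k r g,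
  s ^+ k * N = r + f * g /\ e N * toRF s ^+ k = toRF r.

Lemma Pd_add N1 N2 : Pd N1 -> Pd N2 -> Pd (N1 + N2).
Proof.
move=> [k1 [r1 [g1 [E1 F1]]]] [k2 [r2 [g2 [E2 F2]]]].
exists (k1 + k2)%N, (s ^+ k2 * r1 + s ^+ k1 * r2), (s ^+ k2 * g1 + s ^+ k1 * g2); split.
  rewrite exprD mulrDr.
  have -> : s ^+ k1 * s ^+ k2 * N1 = s ^+ k2 * (s ^+ k1 * N1) by ring.
  have -> : s ^+ k1 * s ^+ k2 * N2 = s ^+ k1 * (s ^+ k2 * N2) by ring.
  rewrite E1 E2; ring.
rewrite (rmorphD e) !(toRFD, toRFM, toRFX) -F1 -F2 exprD; ring.
Qed.

Lemma Pd_mul N1 N2 : Pd N1 -> Pd N2 -> Pd (N1 * N2).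
Proof.
move=> [k1 [r1 [g1 [E1 F1]]]] [k2 [r2 [g2 [E2 F2]]]].
exists (k1 + k2)%N, (r1 * r2), (r1 * g2 + g1 * r2 + f * g1 * g2); split.
  have -> : s ^+ (k1 + k2) * (N1 * N2) = (s ^+ k1 * N1) * (s ^+ k2 * N2) by rewrite exprD; ring.
  rewrite E1 E2; ring.
rewrite (rmorphM e) !(toRFD, toRFM, toRFX) -F1 -F2 exprD; ring.
Qed.

Lemma Pd_C c : Pd c%:MP.
Proof. by exists 0%N, c%:MP, 0; rewrite expr0 mul1r mulr0 addr0 eC mulr1. Qed.

Lemma Pd_all N : Pd N.
Proof.
rewrite [N]mpolyE; elim/big_ind: _.
- by rewrite -mpolyC0; apply: Pd_C.
- exact: Pd_add.
move=> m _; rewrite -mul_mpolyC; apply: Pd_mul; first exact: Pd_C.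
rewrite mpolyXE_id; elim/big_ind: _.
- by rewrite -mpolyC1; apply: Pd_C.
- exact: Pd_mul.
move=> i _; elim: (m i) => [|j IH]; first by rewrite expr0 -mpolyC1; apply: Pd_C.
by rewrite exprS; apply: Pd_mul => //; apply: eX.
Qed.

Lemma div_cancel k N g : s ^+ k * N = f * g -> exists g', N = f * g'.
Proof.
elim: k N g => [|k IH] N g; first by rewrite expr0 mul1r => ->; exists g.
rewrite exprSr -mulrA => /IH [g1 E].
exists (u * N + v * g1).
rewrite -[LHS]mulr1 -bez mulrDr.
have -> : N * (v * s) = v * (s * N) by ring.
rewrite E; ring.
Qed.

Lemma div_lemma N : e N = 0 -> exists g, N = f * g.
Proof.
move=> h; have [k [r [g [E1 F1]]]] := Pd_all N.
move: F1; rewrite h mul0r => /esym/eqP; rewrite toRF_eq0 => /eqP r0.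
by apply: (@div_cancel k N g); rewrite E1 r0 add0r.
Qed.
End Div.

Section Rel.
Variables E1 E2 E3 : {rmorphism PP -> RF}.

Definition Rel (u v1 v2 v3 : RF) := exists N D : PP,
  [/\ E1 D != 0, E2 D != 0, E3 D != 0, u = toRF N / toRF D &
     [/\ v1 = E1 N / E1 D, v2 = E2 N / E2 D & v3 = E3 N / E3 D]].

Lemma Rel_P P : Rel (toRF P) (E1 P) (E2 P) (E3 P).
Proof.
exists P, 1; rewrite !rmorph1 toRF1 !divr1; split => //; exact: oner_neq0.
Qed.

Lemma toRFN (x : PP) : toRF (- x) = - toRF x. Proof. exact: tofracN. Qed.

Lemma toRF_neq0 (D : PP) (E : {rmorphism PP -> RF}) : E D != 0 -> toRF D != 0.
Proof.
move=> h; rewrite toRF_eq0; apply: contraNneq h => ->; by rewrite rmorph0.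
Qed.
Arguments toRF_neq0 {D E}.

Lemma Rel_add u v1 v2 v3 u' w1 w2 w3 : Rel u v1 v2 v3 -> Rel u' w1 w2 w3 ->
  Rel (u + u') (v1 + w1) (v2 + w2) (v3 + w3).
Proof.
move=> [N [D [h1 h2 h3 -> [-> -> ->]]]] [N' [D' [h1' h2' h3' -> [-> -> ->]]]].
exists (N * D' + N' * D), (D * D'); rewrite !rmorphD !rmorphM /=.
have hD := toRF_neq0 h1; have hD' := toRF_neq0 h1'.
split; [exact: (mulf_neq0 h1 h1')|exact: (mulf_neq0 h2 h2')|exact: (mulf_neq0 h3 h3')| |].
  by rewrite toRFD !toRFM addf_div; [|exact: hD|exact: hD'].
split; rewrite addf_div; [|exact: h1|exact: h1'| |exact: h2|exact: h2'| |exact: h3|exact: h3'];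
  reflexivity.
Qed.

Lemma Rel_mul u v1 v2 v3 u' w1 w2 w3 : Rel u v1 v2 v3 -> Rel u' w1 w2 w3 ->
  Rel (u * u') (v1 * w1) (v2 * w2) (v3 * w3).
Proof.
move=> [N [D [h1 h2 h3 -> [-> -> ->]]]] [N' [D' [h1' h2' h3' -> [-> -> ->]]]].
exists (N * N'), (D * D'); rewrite !rmorphM /=.
split; [exact: (mulf_neq0 h1 h1')|exact: (mulf_neq0 h2 h2')|exact: (mulf_neq0 h3 h3')| |].
  by rewrite !toRFM mulf_div.
by split; rewrite mulf_div.
Qed.

Lemma Rel_opp u v1 v2 v3 : Rel u v1 v2 v3 -> Rel (- u) (- v1) (- v2) (- v3).
Proof.
move=> [N [D [h1 h2 h3 -> [-> -> ->]]]].
exists (- N), D; rewrite !rmorphN /=; split; [exact: h1|exact: h2|exact: h3| |].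
  by rewrite toRFN mulNr.
by split; rewrite mulNr.
Qed.

Lemma Rel_inv u v1 v2 v3 : Rel u v1 v2 v3 -> v1 != 0 -> v2 != 0 -> v3 != 0 ->
  Rel u^-1 v1^-1 v2^-1 v3^-1.
Proof.
move=> [N [D [h1 h2 h3 -> [-> -> ->]]]] n1 n2 n3.
have k1 : E1 N != 0 by apply: contraNneq n1 => ->; rewrite mul0r.
have k2 : E2 N != 0 by apply: contraNneq n2 => ->; rewrite mul0r.
have k3 : E3 N != 0 by apply: contraNneq n3 => ->; rewrite mul0r.
exists D, N; split; [exact: k1|exact: k2|exact: k3| |].
  by rewrite invf_div.
by split; rewrite invf_div.
Qed.

Lemma Rel_sub u v1 v2 v3 u' w1 w2 w3 : Rel u v1 v2 v3 -> Rel u' w1 w2 w3 ->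
  Rel (u - u') (v1 - w1) (v2 - w2) (v3 - w3).
Proof. by move=> h h'; apply: Rel_add => //; apply: Rel_opp. Qed.

Lemma Rel_div u v1 v2 v3 u' w1 w2 w3 : Rel u v1 v2 v3 -> Rel u' w1 w2 w3 ->
  w1 != 0 -> w2 != 0 -> w3 != 0 ->
  Rel (u / u') (v1 / w1) (v2 / w2) (v3 / w3).
Proof. by move=> h h' n1 n2 n3; apply: Rel_mul => //; apply: Rel_inv. Qed.

Lemma Rel_1 : Rel 1 1 1 1.
Proof. by have := Rel_P 1; rewrite toRF1 !rmorph1. Qed.

Lemma Rel_X u v1 v2 v3 k : Rel u v1 v2 v3 -> Rel (u ^+ k) (v1 ^+ k) (v2 ^+ k) (v3 ^+ k).
Proof.
move=> h; elim: k => [|k IH]; first by rewrite !expr0; exact: Rel_1.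
by rewrite !exprS; apply: Rel_mul.
Qed.

Lemma Rel_prod n (F : 'I_n -> RF) G1 G2 G3 :
  (forall i, Rel (F i) (G1 i) (G2 i) (G3 i)) ->
  Rel (\prod_(i < n) F i) (\prod_(i < n) G1 i) (\prod_(i < n) G2 i) (\prod_(i < n) G3 i).
Proof.
move=> h; elim: n F G1 G2 G3 h => [|n IH] F G1 G2 G3 h.
  by rewrite !big_ord0; exact: Rel_1.
by rewrite !big_ord_recr /=; apply: Rel_mul => //; apply: IH.
Qed.

Lemma Rel_sum n (F : nat -> RF) G1 G2 G3 :
  (forall i, (i < n)%N -> Rel (F i) (G1 i) (G2 i) (G3 i)) ->
  Rel (\sum_(0 <= i < n) F i) (\sum_(0 <= i < n) G1 i) (\sum_(0 <= i < n) G2 i) (\sum_(0 <= i < n) G3 i).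
Proof.
elim: n => [|n IH] h.
  rewrite !big_geq //; have := Rel_P 0; rewrite toRF0 !rmorph0; exact.
rewrite !big_nat_recr //=; apply: Rel_add; first by apply: IH => i hi; apply: h; apply: ltnW.
exact: h.
Qed.

Lemma Rel_qpoch x v1 v2 v3 p w1 w2 w3 k : Rel x v1 v2 v3 -> Rel p w1 w2 w3 ->
  Rel (qpoch x p k) (qpoch v1 w1 k) (qpoch v2 w2 k) (qpoch v3 w3 k).
Proof.
move=> hx hp; apply: Rel_prod => i; apply: Rel_sub; first exact: Rel_1.
by apply: Rel_mul => //; apply: Rel_X.
Qed.
End Rel.

Definition ia : 'I_4 := @inord 3 0.
Definition ib : 'I_4 := @inord 3 1.
Definition ic : 'I_4 := @inord 3 2.
Definition iq : 'I_4 := @inord 3 3.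

Lemma ineq (i j : nat) : (i < 4)%N -> (j < 4)%N -> i != j -> (@inord 3 i == @inord 3 j) = false.
Proof.
move=> hi hj hij; apply/eqP => /(congr1 val); rewrite /= !inordK // => e.
by rewrite e eqxx in hij.
Qed.

Lemma iab : (ia == ib) = false. Proof. exact: ineq. Qed.
Lemma iac : (ia == ic) = false. Proof. exact: ineq. Qed.
Lemma iaq : (ia == iq) = false. Proof. exact: ineq. Qed.
Lemma iba : (ib == ia) = false. Proof. exact: ineq. Qed.
Lemma ibc : (ib == ic) = false. Proof. exact: ineq. Qed.
Lemma ibq : (ib == iq) = false. Proof. exact: ineq. Qed.
Lemma ica : (ic == ia) = false. Proof. exact: ineq. Qed.
Lemma icb : (ic == ib) = false. Proof. exact: ineq. Qed.
Lemma icq : (ic == iq) = false. Proof. exact: ineq. Qed.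
Lemma iqa : (iq == ia) = false. Proof. exact: ineq. Qed.
Lemma iqb : (iq == ib) = false. Proof. exact: ineq. Qed.
Lemma iqc : (iq == ic) = false. Proof. exact: ineq. Qed.
Definition ineqs := (iab, iac, iaq, iba, ibc, ibq, ica, icb, icq, iqa, iqb, iqc, eqxx).

Lemma mono_ne (m1 m2 : 'X_{1..4}) (i : 'I_4) : m1 i != m2 i ->
  toRF 'X_[m1] - toRF 'X_[m2] != 0.
Proof.
move=> h; rewrite -toRFB toRF_eq0; apply/eqP => e.
have := congr1 (fun p : PP => p@_m1) e; rewrite /= mcoeffB !mcoeffX eqxx mcoeff0.
have -> : (m2 == m1) = false by apply/eqP => e2; rewrite e2 eqxx in h.
by rewrite subr0 => /eqP; rewrite oner_eq0.
Qed.

Lemma mono_neq0 (m : 'X_{1..4}) : toRF 'X_[m] != 0.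
Proof.
rewrite toRF_eq0; apply/eqP => e.
have := congr1 (fun p : PP => p@_m) e; rewrite /= mcoeffX eqxx mcoeff0.
by move/eqP; rewrite oner_eq0.
Qed.

Lemma mono_frac (m1 m2 : 'X_{1..4}) (i : 'I_4) : m1 i != m2 i ->
  1 - toRF 'X_[m1] / toRF 'X_[m2] != 0.
Proof.
move=> h; have h2 := mono_neq0 m2.
have -> : 1 - toRF 'X_[m1] / toRF 'X_[m2] = (toRF 'X_[m2] - toRF 'X_[m1]) / toRF 'X_[m2].
  by rewrite mulrBl divff.
apply: mulf_neq0; last by rewrite invr_eq0.
by apply: (@mono_ne _ _ i); rewrite eq_sym.
Qed.

Lemma toRFXm (m1 m2 : 'X_{1..4}) : toRF 'X_[m1 + m2] = toRF 'X_[m1] * toRF 'X_[m2].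
Proof. by rewrite mpolyXD toRFM. Qed.
Lemma toRFXn (m : 'X_{1..4}) k : toRF 'X_[m *+ k] = toRF 'X_[m] ^+ k.
Proof. by rewrite -mpolyXn toRFX. Qed.
Lemma toRFX0 : toRF 'X_[0] = 1.
Proof. by rewrite mpolyX0 toRF1. Qed.

Lemma faE : fa = toRF 'X_[U_(ia)]. Proof. by []. Qed.
Lemma fbE : fb = toRF 'X_[U_(ib)]. Proof. by []. Qed.
Lemma fcE : fc = toRF 'X_[U_(ic)]. Proof. by []. Qed.
Lemma fqE : fq = toRF 'X_[U_(iq)]. Proof. by []. Qed.
Definition toMono := (toRFXm, toRFXn, toRFX0, faE, fbE, fcE, fqE).
Definition mnmC := (@mnmDE 4, @mulmnE 4, @mnm1E 4, @mnm0E 4, ineqs, muln0, mul0n, mul1n, muln1, addn0, add0n).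

Lemma fa_neq0 : fa != 0. Proof. exact: mono_neq0. Qed.
Lemma fb_neq0 : fb != 0. Proof. exact: mono_neq0. Qed.
Lemma fc_neq0 : fc != 0. Proof. exact: mono_neq0. Qed.
Lemma fq_neq0 : fq != 0. Proof. exact: mono_neq0. Qed.

Section Ev.
Variable e : nat.
Definition Q := fq ^+ e.
Lemma Q_neq0 : Q != 0. Proof. exact: expf_neq0 fq_neq0. Qed.
Lemma QE : toRF (Xq ^+ e) = Q. Proof. by rewrite toRFX. Qed.

Definition hsub (j : 'I_4) (w : RF) := fun i : 'I_4 => if i == j then w else toRF 'X_i.
Definition E1 : {rmorphism PP -> RF} := ev (hsub ia Q^-1).
Definition E2 : {rmorphism PP -> RF} := ev (hsub ia Q).
Definition E3 : {rmorphism PP -> RF} := ev (hsub ib Q).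

Definition f1 : PP := 1 - Xa * Xq ^+ e.
Definition f2 : PP := Xa - Xq ^+ e.
Definition f3 : PP := Xb - Xq ^+ e.

Lemma hsubE j w i : hsub j w i = if i == j then w else toRF 'X_i. Proof. by []. Qed.

Lemma E1E x : E1 x = ev (hsub ia Q^-1) x. Proof. reflexivity. Qed.
Lemma E2E x : E2 x = ev (hsub ia Q) x. Proof. reflexivity. Qed.
Lemma E3E x : E3 x = ev (hsub ib Q) x. Proof. reflexivity. Qed.

Lemma E1X i : E1 'X_i = if i == ia then Q^-1 else toRF 'X_i.
Proof. by rewrite E1E evX hsubE. Qed.
Lemma E2X i : E2 'X_i = if i == ia then Q else toRF 'X_i.
Proof. by rewrite E2E evX hsubE. Qed.
Lemma E3X i : E3 'X_i = if i == ib then Q else toRF 'X_i.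
Proof. by rewrite E3E evX hsubE. Qed.
Lemma E1C c : E1 c%:MP = toRF c%:MP. Proof. by rewrite E1E evC. Qed.
Lemma E2C c : E2 c%:MP = toRF c%:MP. Proof. by rewrite E2E evC. Qed.
Lemma E3C c : E3 c%:MP = toRF c%:MP. Proof. by rewrite E3E evC. Qed.

Lemma E1a : E1 Xa = Q^-1. Proof. by rewrite E1X eqxx. Qed.
Lemma E1b : E1 Xb = fb. Proof. by rewrite E1X iba. Qed.
Lemma E1c : E1 Xc = fc. Proof. by rewrite E1X ica. Qed.
Lemma E1q : E1 Xq = fq. Proof. by rewrite E1X iqa. Qed.
Lemma E2a : E2 Xa = Q. Proof. by rewrite E2X eqxx. Qed.
Lemma E2b : E2 Xb = fb. Proof. by rewrite E2X iba. Qed.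
Lemma E2c : E2 Xc = fc. Proof. by rewrite E2X ica. Qed.
Lemma E2q : E2 Xq = fq. Proof. by rewrite E2X iqa. Qed.
Lemma E3a : E3 Xa = fa. Proof. by rewrite E3X iab. Qed.
Lemma E3b : E3 Xb = Q. Proof. by rewrite E3X eqxx. Qed.
Lemma E3c : E3 Xc = fc. Proof. by rewrite E3X icb. Qed.
Lemma E3q : E3 Xq = fq. Proof. by rewrite E3X iqb. Qed.

Lemma E1f1 : E1 f1 = 0.
Proof.
rewrite /f1 rmorphB rmorph1 rmorphM rmorphXn /= E1a E1q -/Q mulVf ?subrr //.
exact: Q_neq0.
Qed.
Lemma E2f2 : E2 f2 = 0.
Proof. by rewrite /f2 rmorphB rmorphXn /= E2a E2q -/Q subrr. Qed.
Lemma E3f3 : E3 f3 = 0.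
Proof. by rewrite /f3 rmorphB rmorphXn /= E3b E3q -/Q subrr. Qed.

Lemma div1 N : E1 N = 0 -> exists g, N = f1 * g.
Proof.
apply: (@div_lemma E1 f1 (Xq ^+ e) 1 Xa).
- by rewrite /f1; ring.
- exact: E1C.
move=> i; rewrite E1X; case: (i =P ia) => [->|ne].
  exists 1%N, 1, (-1); split; first by rewrite /f1 -/Xa; ring.
  by rewrite expr1 QE mulVf ?toRF1 //; exact: Q_neq0.
exists 0%N, 'X_i, 0; split; first by rewrite expr0 mul1r mulr0 addr0.
by rewrite expr0 mulr1.
Qed.

Lemma div2 N : E2 N = 0 -> exists g, N = f2 * g.
Proof.
apply: (@div_lemma E2 f2 1 0 1).
- by ring.
- exact: E2C.
move=> i; rewrite E2X; case: (i =P ia) => [->|ne].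
  exists 0%N, (Xq ^+ e), 1; split; first by rewrite /f2 -/Xa; ring.
  by rewrite expr0 mulr1 QE.
exists 0%N, 'X_i, 0; split; first by rewrite expr0 mul1r mulr0 addr0.
by rewrite expr0 mulr1.
Qed.

Lemma div3 N : E3 N = 0 -> exists g, N = f3 * g.
Proof.
apply: (@div_lemma E3 f3 1 0 1).
- by ring.
- exact: E3C.
move=> i; rewrite E3X; case: (i =P ib) => [->|ne].
  exists 0%N, (Xq ^+ e), 1; split; first by rewrite /f3 -/Xb; ring.
  by rewrite expr0 mulr1 QE.
exists 0%N, 'X_i, 0; split; first by rewrite expr0 mul1r mulr0 addr0.
by rewrite expr0 mulr1.
Qed.

Lemma fbQ : fb - Q != 0.
Proof.
rewrite /Q fbE fqE -toRFXn; apply: (@mono_ne _ _ ib); rewrite !mnmC; by [].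
Qed.

Lemma aQ1 : 1 - fa * Q != 0.
Proof.
rewrite /Q faE fqE -toRFXn -toRFXm -toRFX0; apply: (@mono_ne _ _ ia); rewrite !mnmC; by [].
Qed.

Hypothesis e_gt0 : (0 < e)%N.

Lemma QQ : Q^-1 - Q != 0.
Proof.
have hQ := Q_neq0.
have -> : Q^-1 - Q = (1 - Q * Q) * Q^-1 by rewrite mulrBl mul1r mulrK ?unitfE.
apply: mulf_neq0; last by rewrite invr_eq0.
rewrite /Q fqE -!toRFXn -toRFXm -toRFX0; apply: (@mono_ne _ _ iq); rewrite !mnmC.
by rewrite eq_sym -lt0n addn_gt0 e_gt0.
Qed.

Lemma f1_neq0 : f1 != 0.
Proof.
apply: contraNneq aQ1 => h.
have : E3 f1 = 1 - fa * Q by rewrite /f1 rmorphB rmorph1 rmorphM rmorphXn /= E3a E3q.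
by rewrite h rmorph0 => <-.
Qed.

Lemma E_neq0_neq0 (E : {rmorphism PP -> RF}) (x : PP) : E x != 0 -> x != 0.
Proof. by apply: contraNneq => ->; rewrite rmorph0. Qed.

Lemma E1f3 : E1 f3 = fb - Q.
Proof. by rewrite /f3 rmorphB rmorphXn /= E1b E1q. Qed.
Lemma E2f3 : E2 f3 = fb - Q.
Proof. by rewrite /f3 rmorphB rmorphXn /= E2b E2q. Qed.
Lemma E1f2 : E1 f2 = Q^-1 - Q.
Proof. by rewrite /f2 rmorphB rmorphXn /= E1a E1q. Qed.

Lemma f2_neq0 : f2 != 0. Proof. apply: (@E_neq0_neq0 E1); rewrite E1f2; exact: QQ. Qed.
Lemma f3_neq0 : f3 != 0. Proof. apply: (@E_neq0_neq0 E1); rewrite E1f3; exact: fbQ. Qed.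

Lemma copr (E : {rmorphism PP -> RF}) (f D : PP) : E f = 0 -> f != 0 ->
  (forall N, E N = 0 -> exists g, N = f * g) -> E D != 0 -> pcoprime D f.
Proof.
move=> Ef fn0 dv ED h [k Dk] [g fg].
have : E (h * g) = 0 by rewrite -fg.
rewrite rmorphM.
move/eqP; rewrite mulf_eq0 => /orP [/eqP Eh|/eqP Eg].
  by move: ED; rewrite Dk rmorphM Eh mul0r eqxx.
have [g' gg'] := dv g Eg.
have e1 : f * (h * g') = f * 1 by rewrite mulr1 [in RHS]fg gg' mulrCA.
have := mulfI fn0 e1 => hg.
by apply/unitrP; exists g'; rewrite mulrC hg.
Qed.

Lemma final_from_rel (S : RF) : Rel E1 E2 E3 S 0 0 0 -> exists N D : PP,
  [/\ D != 0, pcoprime D f1, pcoprime D f2, pcoprime D f3 &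
    S = (f1 * f2 * f3)%:F * (N%:F / D%:F)].
Proof.
move=> [N [D [h1 h2 h3 -> [z1 z2 z3]]]].
have n1 : E1 N = 0.
  by apply/eqP; move: z1 => /esym/eqP; rewrite mulf_eq0 invr_eq0 (negbTE h1) orbF.
have n2 : E2 N = 0.
  by apply/eqP; move: z2 => /esym/eqP; rewrite mulf_eq0 invr_eq0 (negbTE h2) orbF.
have n3 : E3 N = 0.
  by apply/eqP; move: z3 => /esym/eqP; rewrite mulf_eq0 invr_eq0 (negbTE h3) orbF.
have [g3 e3] := @div3 N n3.
have : E2 g3 = 0.
  move: n2; rewrite e3 rmorphM /= E2f3 => /eqP; rewrite mulf_eq0 (negbTE fbQ) /=.
  by move/eqP.
move=> /div2 [g2 e2].
have : E1 g2 = 0.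
  move: n1; rewrite e3 e2 !rmorphM /= E1f3 E1f2 => /eqP.
  rewrite !mulf_eq0 (negbTE fbQ) (negbTE QQ) /=; by move/eqP.
move=> /div1 [g1 e1].
exists g1, D; split.
- exact: (@E_neq0_neq0 E1 D h1).
- apply: (@copr E1 f1 D); [exact: E1f1|exact: f1_neq0|exact: div1|exact: h1].
- apply: (@copr E2 f2 D); [exact: E2f2|exact: f2_neq0|exact: div2|exact: h2].
- apply: (@copr E3 f3 D); [exact: E3f3|exact: f3_neq0|exact: div3|exact: h3].
rewrite e3 e2 e1 [RHS]mulrA; congr (_ / _); rewrite !toRFM; ring.
Qed.
End Ev.


Section G.
Variable F : fieldType.
Variables (c q Q : F) (d m : nat).
Local Notation p := (q ^+ d).

Definition LG (a b : F) := \sum_(0 <= k < m.+1)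
       qpoch (a * q) p k * qpoch (q / a) p k * qpoch (q / b) p k
       / (qpoch p p k * qpoch c p k * qpoch (q ^+ (d + 3) / (b * c)) p k)
       * p ^+ k.
Definition RG (a b : F) :=
  (1 - a * Q) * (a - Q) / ((a - b) * (1 - a * b))
       * (qpoch (c / (a * q)) p m * qpoch (a * c / q) p m
          / (qpoch c p m * qpoch (c / q ^+ 2) p m))
     + (b - Q) * (a * b - 1 - a ^+ 2 + a * Q) / ((a - b) * (1 - a * b))
       * ((q / b) ^+ m * qpoch (b * c / q) p m * qpoch (q ^+ (d + 2) / c) p m
          / (qpoch c p m * qpoch (q ^+ (d + 3) / (b * c)) p m)).

Hypothesis hQ : Q = q * p ^+ m.
Hypothesis hq : q != 0.
Hypothesis hc : c != 0.
Hypothesis hpj : forall j, 1 - p ^+ j.+1 != 0.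
Hypothesis hCj : forall j, 1 - c * p ^+ j != 0.

Lemma L3 (a : F) : a != 0 -> a - Q != 0 -> 1 - a * Q != 0 ->
  (forall j, 1 - c * p ^+ j / (a * q * (q / a)) != 0) ->
  (forall i j, 1 - a * q * (q / a) * p ^+ i / (c * p ^+ j) != 0) ->
  LG a Q - RG a Q = 0.
Proof.
move=> ha h1 h2 hCAB hABC.
have hp : p != 0 by rewrite expf_neq0.
have S := @saal F (a * q) (q / a) c p hp (mulf_neq0 ha hq) (mulf_neq0 hq (invr_neq0 ha)) hc hpj hCj hCAB hABC m.
apply/eqP; rewrite subr_eq0; apply/eqP.
rewrite /LG big_mkord.
have e1 : q / Q = (p ^+ m)^-1 by rewrite hQ; field; rewrite hq expf_neq0 // expf_neq0.
have e2 : q ^+ (d + 3) / (Q * c) = a * q * (q / a) * p / (c * p ^+ m).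
  by rewrite hQ exprD; field; rewrite hq hc ha !expf_neq0 // expf_neq0.
rewrite e1 e2; rewrite /sterm in S; rewrite S /RG subrr !mul0r addr0.
rewrite /srhs.
have e3 : a * c / q = c / (q / a) by field; rewrite hq ha.
have e4 : c / q ^+ 2 = c / (a * q * (q / a)) by field; rewrite hq ha.
have q1 : qpoch c p m != 0 by apply: qpoch_neq0 => i _; exact: hCj.
have q2 : qpoch (c / (a * q * (q / a))) p m != 0.
  by apply: qpoch_neq0 => i _; rewrite mulrAC; exact: hCAB.
by rewrite e3 e4; field; rewrite q1 q2 h1 h2.
Qed.

Section L12.
Variable b : F.
Hypothesis hb : b != 0.
Hypothesis hCAB2 : forall j, 1 - c * p ^+ j / (Q * q * (q / b)) != 0.
Hypothesis hABC2 : forall i j, 1 - Q * q * (q / b) * p ^+ i / (c * p ^+ j) != 0.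
Hypothesis hrev : forall i, 1 - p ^+ i / (b * c / (q ^+ 3 * p)) != 0.

Lemma hQ0 : Q != 0. Proof. by rewrite hQ mulf_neq0 // !expf_neq0. Qed.

Lemma T2eq : @srhs F (Q * q) (q / b) c p m =
  (q / b) ^+ m * qpoch (b * c / q) p m * qpoch (q ^+ (d + 2) / c) p m
          / (qpoch c p m * qpoch (q ^+ (d + 3) / (b * c)) p m).
Proof.
have hp : p != 0 by rewrite expf_neq0.
set w1 := c / (q ^+ 2 * p); set w2 := b * c / (q ^+ 3 * p).
have hw1 : w1 != 0 by rewrite /w1 mulf_neq0 // invr_neq0 // mulf_neq0 // expf_neq0.
have hw2 : w2 != 0 by rewrite /w2 mulf_neq0 ?mulf_neq0 // invr_neq0 // mulf_neq0 // expf_neq0.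
have R := @rev_ratio F w1 w2 p m hp hw1 hw2 hrev.
have e1 : c / (Q * q) = w1 * p / p ^+ m.
  by rewrite /w1 hQ; field; rewrite hq hp expf_neq0.
have e2 : c / (Q * q * (q / b)) = w2 * p / p ^+ m.
  by rewrite /w2 hQ; field; rewrite hq hp hb expf_neq0.
have e3 : w1 / w2 = q / b by rewrite /w1 /w2; field; rewrite hq hp hb hc.
have e4 : w1^-1 = q ^+ (d + 2) / c by rewrite /w1 exprD; field; rewrite hq hc hp.
have e5 : w2^-1 = q ^+ (d + 3) / (b * c) by rewrite /w2 exprD; field; rewrite hq hc hb hp.
have e6 : c / (q / b) = b * c / q by field; rewrite hq hb.
rewrite e3 e4 e5 in R.
have Z2 : qpoch (w2 * p / p ^+ m) p m != 0.
  by rewrite -e2; apply: qpoch_neq0 => i _; rewrite mulrAC; exact: hCAB2.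
have Y1 : qpoch c p m != 0 by apply: qpoch_neq0 => i _; exact: hCj.
have Y2 : qpoch (q ^+ (d + 3) / (b * c)) p m != 0.
  by rewrite -e5; apply: qpoch_neq0 => i _; rewrite mulrC; exact: hrev.
rewrite /srhs e1 e2 e6.
move: R Z2 Y1 Y2.
move: (qpoch (w1 * p / p ^+ m) p m) (qpoch (w2 * p / p ^+ m) p m) (qpoch (b * c / q) p m)
  (qpoch (q ^+ (d + 2) / c) p m) (qpoch c p m) (qpoch (q ^+ (d + 3) / (b * c)) p m).
move=> X1 Z2 X2 W1 Y1 W2 R hZ2 hY1 hW2.
have -> : X1 = (q / b) ^+ m * (W1 / W2) * Z2.
  by rewrite -R; field.
by field; rewrite hZ2 hY1 hW2.
Qed.

Lemma sum12 : \sum_(0 <= k < m.+1)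
       qpoch (Q * q) p k * qpoch (q / b) p k * qpoch (q / Q) p k
       / (qpoch p p k * qpoch c p k * qpoch (q ^+ (d + 3) / (b * c)) p k)
       * p ^+ k = @srhs F (Q * q) (q / b) c p m.
Proof.
have hp : p != 0 by rewrite expf_neq0.
have hQ' := hQ0.
have S := @saal F (Q * q) (q / b) c p hp (mulf_neq0 hQ' hq) (mulf_neq0 hq (invr_neq0 hb))
   hc hpj hCj hCAB2 hABC2 m.
rewrite -S big_mkord /sterm.
have e1 : q / Q = (p ^+ m)^-1 by rewrite hQ; field; rewrite ?hq ?hc ?hb ?hp ?expf_neq0.
have e2 : q ^+ (d + 3) / (b * c) = Q * q * (q / b) * p / (c * p ^+ m).
  by rewrite hQ exprD; field; rewrite ?hq ?hc ?hb ?hp ?expf_neq0.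
by rewrite e1 e2.
Qed.

Lemma L2 : Q - b != 0 -> 1 - Q * b != 0 -> LG Q b - RG Q b = 0.
Proof.
move=> h1 h2.
have e : LG Q b = @srhs F (Q * q) (q / b) c p m.
  rewrite -sum12 /LG; apply: eq_bigr => k _; congr (_ / _ * _); ring.
rewrite e T2eq /RG subrr mulr0 !mul0r add0r.
set T := (q / b) ^+ m * _ * _ / _.
by field; rewrite h1 h2.
Qed.

Lemma L1 : Q - b != 0 -> 1 - b * Q != 0 -> LG Q^-1 b - RG Q^-1 b = 0.
Proof.
move=> h1 h2.
have hQ' := hQ0.
have e : LG Q^-1 b = @srhs F (Q * q) (q / b) c p m.
  rewrite -sum12 /LG; apply: eq_bigr => k _.
  have -> : Q^-1 * q = q / Q by rewrite mulrC.
  have -> : q / Q^-1 = Q * q by rewrite invrK mulrC.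
  congr (_ / _ * _); ring.
rewrite e T2eq /RG mulVf // subrr !mul0r add0r.
set T := (q / b) ^+ m * _ * _ / _.
by field; rewrite ?mulNr h1 h2 hQ'.
Qed.
End L12.
End G.

Ltac tomono := rewrite ?faE ?fbE ?fcE ?fqE -?toRFXn -?toRFXm.
Ltac monoc i := apply: (@mono_ne _ _ i); rewrite !mnmC.

Lemma sub_neq0_frac (x y : RF) : y != 0 -> y - x != 0 -> 1 - x / y != 0.
Proof. by move=> hy h; rewrite -one_sub_div. Qed.

Lemma gA {F : fieldType} (a q : F) : a != 0 -> a * q * (q / a) = q * q.
Proof. by move=> h; field. Qed.
Lemma gB {F : fieldType} (c P X q b : F) : b != 0 -> X != 0 -> q != 0 ->
  c * P / (X * q * (q / b)) = c * P * b / (X * q * q).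
Proof. by move=> h1 h2 h3; field; rewrite h1 h2 h3. Qed.
Lemma gC {F : fieldType} (X q b P : F) : b != 0 -> X * q * (q / b) * P = X * q * q * P / b.
Proof. by move=> h; field. Qed.
Lemma gD {F : fieldType} (P b c q p : F) : b != 0 -> c != 0 -> q != 0 -> p != 0 ->
  P / (b * c / (q ^+ 3 * p)) = P * q ^+ 3 * p / (b * c).
Proof. by move=> h1 h2 h3 h4; field; rewrite h1 h2 h3 h4. Qed.
Lemma gE {F : fieldType} (x b : F) : x != 0 -> x^-1 - b = (1 - b * x) / x.
Proof. by move=> h; field. Qed.
Lemma gF {F : fieldType} (x b : F) : x != 0 -> 1 - x^-1 * b = (x - b) / x.
Proof. by move=> h; field. Qed.
Lemma gG {F : fieldType} (x y z : F) : x / y * z = x * z / y.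
Proof. by rewrite mulrAC. Qed.

Arguments gA {F a q}. Arguments gB {F c P X q b}. Arguments gC {F X q b P}.
Arguments gD {F P b c q p}. Arguments gE {F x b}. Arguments gF {F x b}.

Section NZ.
Variables d e : nat.
Hypothesis d_gt0 : (0 < d)%N.
Hypothesis e_gt0 : (0 < e)%N.
Local Notation QQ := (fq ^+ e).
Local Notation qd := (fq ^+ d).

Lemma nz1 j : 1 - qd ^+ j.+1 != 0.
Proof using d_gt0 e_gt0. rewrite -toRFX0; tomono; monoc iq; nia. Qed.

Lemma QQ_neq0 : QQ != 0. Proof using d_gt0 e_gt0. exact: expf_neq0 fq_neq0. Qed.
Lemma qd_neq0 : qd != 0. Proof using d_gt0 e_gt0. exact: expf_neq0 fq_neq0. Qed.
Lemma fbc : fb * fc != 0. Proof using d_gt0 e_gt0. exact: mulf_neq0 fb_neq0 fc_neq0. Qed.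
Lemma Qc : QQ * fc != 0. Proof using d_gt0 e_gt0. exact: mulf_neq0 QQ_neq0 fc_neq0. Qed.

Lemma nz2 j : 1 - fc * qd ^+ j != 0.
Proof using d_gt0 e_gt0. rewrite -toRFX0; tomono; monoc ic; lia. Qed.

Lemma nzD1 j : 1 - fq ^+ (d + 3) / (fb * fc) * qd ^+ j != 0.
Proof using d_gt0 e_gt0. rewrite gG; apply: sub_neq0_frac; first exact: fbc. tomono; monoc ic; lia. Qed.

Lemma nzD2 j : 1 - fq ^+ (d + 3) / (QQ * fc) * qd ^+ j != 0.
Proof using d_gt0 e_gt0. rewrite gG; apply: sub_neq0_frac; first exact: Qc. tomono; monoc ic; lia. Qed.

Lemma nzc2 j : 1 - fc / fq ^+ 2 * qd ^+ j != 0.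
Proof using d_gt0 e_gt0.
rewrite gG; apply: sub_neq0_frac; first exact: expf_neq0 fq_neq0.
tomono; monoc ic; lia.
Qed.

Lemma bQ1 : 1 - fb * QQ != 0.
Proof using d_gt0 e_gt0. rewrite -toRFX0; tomono; monoc ib; lia. Qed.
Lemma Qb : QQ - fb != 0.
Proof using d_gt0 e_gt0. tomono; monoc ib; lia. Qed.
Lemma Qb1 : 1 - QQ * fb != 0.
Proof using d_gt0 e_gt0. rewrite -toRFX0; tomono; monoc ib; lia. Qed.
Lemma aQ : fa - QQ != 0.
Proof using d_gt0 e_gt0. tomono; monoc ia; lia. Qed.
Lemma aQ1' : 1 - fa * QQ != 0.
Proof using d_gt0 e_gt0. rewrite -toRFX0; tomono; monoc ia; lia. Qed.

Lemma nzp1 : (QQ^-1 - fb) * (1 - QQ^-1 * fb) != 0.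
Proof using d_gt0 e_gt0.
rewrite (gE QQ_neq0) (gF QQ_neq0).
apply: mulf_neq0; apply: mulf_neq0; rewrite ?invr_eq0.
- exact: bQ1.
- exact: QQ_neq0.
- exact: Qb.
- exact: QQ_neq0.
Qed.
Lemma nzp2 : (QQ - fb) * (1 - QQ * fb) != 0.
Proof using d_gt0 e_gt0. exact: mulf_neq0 Qb Qb1. Qed.
Lemma nzp3 : (fa - QQ) * (1 - fa * QQ) != 0.
Proof using d_gt0 e_gt0. exact: mulf_neq0 aQ aQ1'. Qed.

Lemma hCAB3 j : 1 - fc * qd ^+ j / (fa * fq * (fq / fa)) != 0.
Proof using d_gt0 e_gt0.
rewrite (gA fa_neq0); apply: sub_neq0_frac; first exact: mulf_neq0 fq_neq0 fq_neq0.
tomono; monoc ic; lia.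
Qed.
Lemma hABC3 i j : 1 - fa * fq * (fq / fa) * qd ^+ i / (fc * qd ^+ j) != 0.
Proof using d_gt0 e_gt0.
rewrite (gA fa_neq0); apply: sub_neq0_frac; first exact: mulf_neq0 fc_neq0 (expf_neq0 _ qd_neq0).
tomono; monoc ic; lia.
Qed.
Lemma hCAB2 j : 1 - fc * qd ^+ j / (QQ * fq * (fq / fb)) != 0.
Proof using d_gt0 e_gt0.
rewrite (gB fb_neq0 QQ_neq0 fq_neq0); apply: sub_neq0_frac.
  exact: mulf_neq0 (mulf_neq0 QQ_neq0 fq_neq0) fq_neq0.
tomono; monoc ic; lia.
Qed.
Lemma hABC2 i j : 1 - QQ * fq * (fq / fb) * qd ^+ i / (fc * qd ^+ j) != 0.
Proof using d_gt0 e_gt0.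
rewrite (gC fb_neq0) -mulrA -invfM; apply: sub_neq0_frac.
  exact: mulf_neq0 fb_neq0 (mulf_neq0 fc_neq0 (expf_neq0 _ qd_neq0)).
tomono; monoc ic; lia.
Qed.
Lemma hrev i : 1 - qd ^+ i / (fb * fc / (fq ^+ 3 * qd)) != 0.
Proof using d_gt0 e_gt0.
rewrite (gD fb_neq0 fc_neq0 fq_neq0 qd_neq0); apply: sub_neq0_frac; first exact: fbc.
tomono; monoc ic; lia.
Qed.
End NZ.

Ltac relstep := match goal with |- Rel _ _ _ _ _ _ _ => first [ assumption | apply: Rel_qpoch | apply: Rel_add | apply: Rel_opp
  | apply: Rel_mul | apply: Rel_inv | apply: Rel_X | apply: Rel_1 ] end.
Ltac relt := repeat relstep.

Section RelG.
Variables (E1 E2 E3 : {rmorphism PP -> RF}).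
Variables (a a1 a2 b b3 c q Qv : RF) (d m : nat).
Local Notation p := (q ^+ d).
Hypotheses (Ra : Rel E1 E2 E3 a a1 a2 a) (Rb : Rel E1 E2 E3 b b b b3)
  (Rc : Rel E1 E2 E3 c c c c) (Rq : Rel E1 E2 E3 q q q q) (RQ : Rel E1 E2 E3 Qv Qv Qv Qv).
Hypotheses (ha : a != 0) (ha1 : a1 != 0) (ha2 : a2 != 0) (hb : b != 0) (hb3 : b3 != 0)
  (hc : c != 0) (hq : q != 0).
Hypotheses (hp1 : (a1 - b) * (1 - a1 * b) != 0) (hp2 : (a2 - b) * (1 - a2 * b) != 0)
  (hp3 : (a - b3) * (1 - a * b3) != 0).
Hypotheses (hk1 : forall k, qpoch p p k != 0) (hk2 : forall k, qpoch c p k != 0)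
  (hk3 : forall k, qpoch (q ^+ (d + 3) / (b * c)) p k != 0)
  (hk4 : forall k, qpoch (q ^+ (d + 3) / (b3 * c)) p k != 0)
  (hk5 : qpoch (c / q ^+ 2) p m != 0).

Lemma RelG : Rel E1 E2 E3 (@LG RF c q d m a b - @RG RF c q Qv d m a b)
  (@LG RF c q d m a1 b - @RG RF c q Qv d m a1 b) (@LG RF c q d m a2 b - @RG RF c q Qv d m a2 b)
  (@LG RF c q d m a b3 - @RG RF c q Qv d m a b3).
Proof.
have Rp : Rel E1 E2 E3 p p p p by apply: Rel_X.
rewrite /LG /RG.
apply: Rel_sub; first (apply: Rel_sum => k _).
all: relt.
45: exact: (mulf_neq0 (hk2 m) (hk4 m)).
44: exact: (mulf_neq0 (hk2 m) (hk3 m)).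
43: exact: (mulf_neq0 (hk2 m) (hk3 m)).
42: exact: (mulf_neq0 hb3 hc).
41: exact: (mulf_neq0 hb hc).
40: exact: (mulf_neq0 hb hc).
39: exact: hc.
38: exact: hc.
37: exact: hc.
36: exact: hq.
35: exact: hq.
34: exact: hq.
33: exact: hb3.
32: exact: hb.
31: exact: hb.
30: exact: hp3.
29: exact: hp2.
28: exact: hp1.
27: exact: (mulf_neq0 (hk2 m) hk5).
26: exact: (mulf_neq0 (hk2 m) hk5).
25: exact: (mulf_neq0 (hk2 m) hk5).
24: exact: (expf_neq0 2 hq).
23: exact: (expf_neq0 2 hq).
22: exact: (expf_neq0 2 hq).
21: exact: hq.
20: exact: hq.
19: exact: hq.
18: exact: (mulf_neq0 ha hq).
17: exact: (mulf_neq0 ha2 hq).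
16: exact: (mulf_neq0 ha1 hq).
15: exact: hp3.
14: exact: hp2.
13: exact: hp1.
12: exact: (mulf_neq0 (mulf_neq0 (hk1 k) (hk2 k)) (hk4 k)).
11: exact: (mulf_neq0 (mulf_neq0 (hk1 k) (hk2 k)) (hk3 k)).
10: exact: (mulf_neq0 (mulf_neq0 (hk1 k) (hk2 k)) (hk3 k)).
9: exact: (mulf_neq0 hb3 hc).
8: exact: (mulf_neq0 hb hc).
7: exact: (mulf_neq0 hb hc).
6: exact: hb3.
5: exact: hb.
4: exact: hb.
3: exact: ha.
2: exact: ha2.
1: exact: ha1.
Qed.
End RelG.

Lemma arith (d n t : nat) : (2 <= d)%N -> (0 < n)%N -> (t = 1 \/ t = d - 1)%N -> n = t %[mod d] ->
  (t * n = (d * ((t * n - 1) %/ d)).+1)%N.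
Proof.
move=> hd hn ht hmod.
have htn : ((t * n) %% d = 1)%N.
  rewrite -modnMm hmod modnMm.
  case: ht => ->; first by rewrite muln1 modn_small.
  have -> : ((d - 1) * (d - 1) = (d - 2) * d + 1)%N.
    by nia.
  by rewrite modnMDl modn_small.
have e1 := divn_eq (t * n) d.
rewrite htn in e1.
have -> : (t * n - 1 = (t * n) %/ d * d)%N by rewrite {1}e1 addnK.
rewrite mulnK; last by apply: leq_trans hd.
by rewrite {1}e1 addn1 mulnC.
Qed.

Theorem theorem2p1 (d n t : nat) :
  (2 <= d)%N -> (0 < n)%N -> (t = 1 \/ t = d - 1)%N -> n = t %[mod d] ->
  let m := ((t * n - 1) %/ d)%N in
  let a := fa in let b := fb in let c := fc in let q := fq in
  let qd := q ^+ d in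
  let Q := q ^+ (t * n) in
  cong3
    (\sum_(0 <= k < m.+1)
       qpoch (a * q) qd k * qpoch (q / a) qd k * qpoch (q / b) qd k
       / (qpoch qd qd k * qpoch c qd k * qpoch (q ^+ (d + 3) / (b * c)) qd k)
       * qd ^+ k)
    ((1 - a * Q) * (a - Q) / ((a - b) * (1 - a * b))
       * (qpoch (c / (a * q)) qd m * qpoch (a * c / q) qd m
          / (qpoch c qd m * qpoch (c / q ^+ 2) qd m))
     + (b - Q) * (a * b - 1 - a ^+ 2 + a * Q) / ((a - b) * (1 - a * b))
       * ((q / b) ^+ m * qpoch (b * c / q) qd m * qpoch (q ^+ (d + 2) / c) qd m
          / (qpoch c qd m * qpoch (q ^+ (d + 3) / (b * c)) qd m)))
    (1 - Xa * Xq ^+ (t * n)) (Xa - Xq ^+ (t * n)) (Xb - Xq ^+ (t * n)).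
Proof.
move=> hd hn ht hmod.
have hdm := @arith d n t hd hn ht hmod.
move: hdm; set m := ((t * n - 1) %/ d)%N; set tn := (t * n)%N => hdm.
have hd0 : (0 < d)%N by apply: leq_trans hd.
have he0 : (0 < tn)%N by rewrite hdm.
have hQ : fq ^+ tn = fq * (fq ^+ d) ^+ m by rewrite hdm exprS -exprM.
have QQ0 : fq ^+ tn != 0 := @QQ_neq0 d tn hd0 he0.
have Ra : Rel (E1 tn) (E2 tn) (E3 tn) fa (fq ^+ tn)^-1 (fq ^+ tn) fa.
  by have := Rel_P (E1 tn) (E2 tn) (E3 tn) Xa; rewrite E1a E2a E3a /Q.
have Rb : Rel (E1 tn) (E2 tn) (E3 tn) fb fb fb (fq ^+ tn).
  by have := Rel_P (E1 tn) (E2 tn) (E3 tn) Xb; rewrite E1b E2b E3b /Q.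
have Rc : Rel (E1 tn) (E2 tn) (E3 tn) fc fc fc fc.
  by have := Rel_P (E1 tn) (E2 tn) (E3 tn) Xc; rewrite E1c E2c E3c.
have Rq : Rel (E1 tn) (E2 tn) (E3 tn) fq fq fq fq.
  by have := Rel_P (E1 tn) (E2 tn) (E3 tn) Xq; rewrite E1q E2q E3q.
have RQ : Rel (E1 tn) (E2 tn) (E3 tn) (fq ^+ tn) (fq ^+ tn) (fq ^+ tn) (fq ^+ tn) by apply: Rel_X.
have hk1 : forall k, qpoch (fq ^+ d) (fq ^+ d) k != 0.
  by move=> k; apply: qpoch_neq0 => i _; rewrite -exprS; exact: (@nz1 d tn hd0 he0).
have hk2 : forall k, qpoch fc (fq ^+ d) k != 0.
  by move=> k; apply: qpoch_neq0 => i _; exact: (@nz2 d tn hd0 he0).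
have hk3 : forall k, qpoch (fq ^+ (d + 3) / (fb * fc)) (fq ^+ d) k != 0.
  by move=> k; apply: qpoch_neq0 => i _; exact: (@nzD1 d tn hd0 he0).
have hk4 : forall k, qpoch (fq ^+ (d + 3) / (fq ^+ tn * fc)) (fq ^+ d) k != 0.
  by move=> k; apply: qpoch_neq0 => i _; exact: (@nzD2 d tn hd0 he0).
have hk5 : qpoch (fc / fq ^+ 2) (fq ^+ d) m != 0.
  by apply: qpoch_neq0 => i _; exact: (@nzc2 d tn hd0 he0).
have R := @RelG (E1 tn) (E2 tn) (E3 tn) fa (fq ^+ tn)^-1 (fq ^+ tn) fb (fq ^+ tn) fc fq (fq ^+ tn) d m
  Ra Rb Rc Rq RQ fa_neq0 (invr_neq0 QQ0) QQ0 fb_neq0 QQ0 fc_neq0 fq_neq0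
  (@nzp1 d tn hd0 he0) (@nzp2 d tn hd0 he0) (@nzp3 d tn hd0 he0) hk1 hk2 hk3 hk4 hk5.
have Z1 : @LG RF fc fq d m (fq ^+ tn)^-1 fb - @RG RF fc fq (fq ^+ tn) d m (fq ^+ tn)^-1 fb = 0.
  apply: L1.
  - exact: hQ.
  - exact: fq_neq0.
  - exact: fc_neq0.
  - exact: (@nz1 d tn hd0 he0).
  - exact: (@nz2 d tn hd0 he0).
  - exact: fb_neq0.
  - exact: (@hCAB2 d tn hd0 he0).
  - exact: (@hABC2 d tn hd0 he0).
  - exact: (@hrev d tn hd0 he0).
  - exact: (@Qb d tn hd0 he0).
  - exact: (@bQ1 d tn hd0 he0).
have Z2 : @LG RF fc fq d m (fq ^+ tn) fb - @RG RF fc fq (fq ^+ tn) d m (fq ^+ tn) fb = 0.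
  apply: L2.
  - exact: hQ.
  - exact: fq_neq0.
  - exact: fc_neq0.
  - exact: (@nz1 d tn hd0 he0).
  - exact: (@nz2 d tn hd0 he0).
  - exact: fb_neq0.
  - exact: (@hCAB2 d tn hd0 he0).
  - exact: (@hABC2 d tn hd0 he0).
  - exact: (@hrev d tn hd0 he0).
  - exact: (@Qb d tn hd0 he0).
  - exact: (@Qb1 d tn hd0 he0).
have Z3 : @LG RF fc fq d m fa (fq ^+ tn) - @RG RF fc fq (fq ^+ tn) d m fa (fq ^+ tn) = 0.
  apply: L3.
  - exact: hQ.
  - exact: fq_neq0.
  - exact: fc_neq0.
  - exact: (@nz1 d tn hd0 he0).
  - exact: (@nz2 d tn hd0 he0).
  - exact: fa_neq0.
  - exact: (@aQ d tn hd0 he0).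
  - exact: (@aQ1' d tn hd0 he0).
  - exact: (@hCAB3 d tn hd0 he0).
  - exact: (@hABC3 d tn hd0 he0).
rewrite Z1 Z2 Z3 in R.
have [N [D [h1 h2 h3 h4 h5]]] := @final_from_rel tn he0 _ R.
exists N, D; split; [exact: h1|exact: h2|exact: h3|exact: h4|exact: h5].
Qed.
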